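(* In the Basilica setup below, for every $n\in\mathbb{N}$ and all $\delta_1,\delta_2\in\{+,-\}$, the intersection $H_1^{\delta_1}\cap H_2^{\delta_2}\cap Y_n$ is non-empty.
   Context: Basilica replacement rule: edge $e\colon v\to w$ is replaced by $R$ with vertices $v,w,4$ and edges $1\colon v\to4$, loop $2$ at $4$, $3\colon4\to w$. Base graph $G_0$: vertices $x,y$, loop $a$ at $x$, loop $c$ at $y$, edges $b\colon x\to y$, $d\colon y\to x$. $K(G_0)$ is the rearrangement cube complex: $0$-cubes are range equivalence classes $[f]$ of rearrangements $f\colon X(G_0)\to X(G)$ between limit spaces (homeomorphisms represented by a directed graph isomorphism between an expansion of $G_0$ and an expansion of $G$, acting as canonical prefix replacements on cells); for each such $f$ and $S\subseteq E(G)$ there is a cube with $0$-cubes $\{[\Delta_T\circ f]:T\subseteq S\}$, where $\Delta_T$ is the expansion rearrangement expanding the edges of $T$ and $\nabla$ denotes the inverse (contraction) rearrangement of a copy of $R$, written by listing its three edges. It is $\operatorname{CAT}(0)$. The rank $h([f])=|E(G)|$, extended affinely; $K(G_0)_m$ is the subcomplex spanned by $0$-cubes of rank $\le m$. The graph $J_n$ ($n+5$ vertices, $2n+10$ edges): vertices $u_0,\dots,u_n,p,q,l,m$; for $0\le i<n$ edges $u_i\to u_{i+1}$ and $u_{i+1}\to u_i$; edges $v\colon u_0\to p$, loop $w$ at $p$, $x\colon p\to q$, loop $y$ at $q$, $z\colon q\to u_0$; edges $a\colon u_n\to l$, loop $b$ at $l$, $c\colon l\to m$, loop $d$ at $m$,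 $e\colon m\to u_n$. $J_n$ is an expansion of $G_0$; fix a rearrangement $f_n\colon X(G_0)\to X(J_n)$. Walls are parallel classes of $1$-cubes; $H_1$ is the wall containing the $1$-cube from $[f_n]$ to $[\nabla_{x,y,z}\circ f_n]$, and $H_2$ the wall containing the $1$-cube from $[f_n]$ to $[\nabla_{c,d,e}\circ f_n]$. For $i=1,2$, $H_i^+$ is the half-space of $H_i$ (subcomplex spanned by the $0$-cubes of one complementary component of the corresponding hyperplane) containing $[f_n]$, and $H_i^-$ is the other half-space. $Y_n\mathrel{:}=K(G_0)_{2n+9}$. *)

(* Defs.v *)
From Stdlib Require Import Relation_Operators.
From HB Require Import structures.
From mathcomp Require Import all_boot.
Set Implicit Arguments. Unset Strict Implicit. Unset Printing Implicit Defensive.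

Record graph := Graph {
  gV : finType; gE : finType; gsrc : gE -> gV; gtgt : gE -> gV }.

(* A cell address of X(G): an edge of G followed by a word over the three edges
   of the replacement graph R (index 0,1,2 = edges 1,2,3 of R; the head of the
   word is the first replacement step). *)
Notation addr G := (gE G * seq 'I_3)%type.
Definition acat (G : graph) (a : addr G) (w : seq 'I_3) : addr G := (a.1, a.2 ++ w).

(* Vertices of expansions of G: vertices of G, and the new vertex (vertex 4 of R)
   created when the cell a is expanded, named inr a. *)
Notation vtx G := (gV G + addr G)%type.

Inductive is_exp (G : graph) : seq (addr G) -> Prop :=
| exp_base : @is_exp G [seq (e, [::]) | e <- enum (gE G)]
| exp_step (C : seq (addr G)) (a : addr G) :
    a \in C -> @is_exp G C ->
    @is_exp G ([seq acat a [:: i] | i <- enum 'I_3] ++ rem a C).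

(* Endpoints (source, target) of a cell in any expansion containing it,
   following the replacement rule 1 : v -> 4, loop 2 at 4, 3 : 4 -> w. *)
Fixpoint endp_aux (G : graph) (e : gE G) (pre : seq 'I_3) (s t : vtx G)
    (w : seq 'I_3) : vtx G * vtx G :=
  match w with
  | [::] => (s, t)
  | i :: w' =>
      let m : vtx G := inr (e, pre) in
      let st := if val i == 0 then (s, m) else if val i == 1 then (m, m) else (m, t) in
      endp_aux e (rcons pre i) st.1 st.2 w'
  end.
Definition endp (G : graph) (a : addr G) : vtx G * vtx G :=
  endp_aux a.1 [::] (inl (gsrc a.1)) (inl (gtgt a.1)) a.2.

Definition sprefix (G : graph) (a c : addr G) : Prop :=
  a.1 = c.1 /\ exists (i : 'I_3) (u : seq 'I_3), c.2 = a.2 ++ i :: u.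

Definition vin (G : graph) (C : seq (addr G)) (x : vtx G) : Prop :=
  match x with inl _ => True | inr a => exists2 c, c \in C & sprefix a c end.

Definition is_iso_exp (G G' : graph) (C : seq (addr G)) (C' : seq (addr G'))
    (sigma : addr G -> addr G') (phi : vtx G -> vtx G') : Prop :=
  [/\ perm_eq (map sigma C) C',
      (forall x y, vin C x -> vin C y -> phi x = phi y -> x = y),
      (forall x, vin C x -> vin C' (phi x)),
      (forall y, vin C' y -> exists x, vin C x /\ phi x = y) &
      (forall c, c \in C -> endp (sigma c) = (phi (endp c).1, phi (endp c).2))].

(* F represents a rearrangement X(G) -> X(G'): a graph isomorphism between
   expansions, acting by canonical prefix replacement on cells. *)
Definition is_rearr (G G' : graph) (F : addr G -> addr G') : Prop :=
  exists (C : seq (addr G)) (C' : seq (addr G')) sigma phi,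
    [/\ @is_exp G C, @is_exp G' C', is_iso_exp C C' sigma phi &
        forall c w, c \in C -> F (acat c w) = acat (sigma c) w].

(* two address maps define the same homeomorphism *)
Definition ev_eq (G G' : graph) (F F' : addr G -> addr G') : Prop :=
  exists C, @is_exp G C /\ forall c w, c \in C -> F (acat c w) = F' (acat c w).

Definition giso (G G' : graph) (iV : gV G -> gV G') (iE : gE G -> gE G') : Prop :=
  [/\ bijective iV, bijective iE &
      forall e, gsrc (iE e) = iV (gsrc e) /\ gtgt (iE e) = iV (gtgt e)].

(* vertices x = 0, y = 1 ; edges a = 0 (loop at x), b = 1 (x->y), c = 2 (loop at y), d = 3 (y->x) *)
Definition G0 : graph := {|
  gV := 'I_2; gE := 'I_4;
  gsrc := fun e => if val e < 2 then (inord 0 : 'I_2) else inord 1;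
  gtgt := fun e => match val e with 0 => (inord 0 : 'I_2) | 1 => inord 1 | 2 => inord 1 | _ => inord 0 end |}.

Record rep := Rep { rG : graph; rF : addr G0 -> addr rG }.
Definition valid (r : rep) : Prop := is_rearr (rF r).

Definition req (a b : rep) : Prop :=
  exists (iV : gV (rG a) -> gV (rG b)) (iE : gE (rG a) -> gE (rG b)),
    giso iV iE /\ ev_eq (rF b) (fun x => (iE (rF a x).1, (rF a x).2)).

Definition expG (G : graph) (T : {set gE G}) : graph := {|
  gV := (gV G + {e : gE G | e \in T})%type;
  gE := ({e : gE G | e \notin T} + ({e : gE G | e \in T} * 'I_3))%type;
  gsrc := fun x => match x with
                  | inl e => inl (gsrc (val e))
                  | inr (e, i) => if val i == 0 then inl (gsrc (val e)) else inr e end;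
  gtgt := fun x => match x with
                  | inl e => inl (gtgt (val e))
                  | inr (e, i) => if val i == 2 then inl (gtgt (val e)) else inr e end |}.

Definition delta_addr (G : graph) (T : {set gE G}) (a : addr G) : addr (expG T) :=
  (if a.1 \in T as b return (a.1 \in T) = b -> addr (expG T) then
     fun H => ((inr (exist (fun x => x \in T) a.1 H, head ord0 a.2) : gE (expG T)), behead a.2)
   else
     fun H => ((inl (exist (fun x => x \notin T) a.1 (negbT H)) : gE (expG T)), a.2))
  (erefl (a.1 \in T)).

Definition dl (r : rep) (T : {set gE (rG r)}) : rep :=
  Rep (fun x => delta_addr T (rF r x)).

Definition onecube (u v : rep) : Prop :=
  exists (g : rep) (e : gE (rG g)), valid g /\
    ((req u g /\ req v (dl [set e])) \/ (req v g /\ req u (dl [set e]))).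

Definition same1 (k k' : rep * rep) : Prop :=
  (req k.1 k'.1 /\ req k.2 k'.2) \/ (req k.1 k'.2 /\ req k.2 k'.1).

(* k and k' are opposite 1-cubes of a 2-cube {[Delta_T g] : T subset {e,e'}} *)
Definition opp (k k' : rep * rep) : Prop :=
  exists (g : rep) (e e' : gE (rG g)), [/\ valid g, e != e',
    same1 k (g, dl [set e]) & same1 k' (dl [set e'], dl [set e; e'])].

(* parallel 1-cubes: k' lies in the wall containing k *)
Definition parallel (k k' : rep * rep) : Prop :=
  clos_refl_sym_trans _ (fun x y => opp x y \/ same1 x y) k k'.

(* 0-cubes reachable from [start] in the 1-skeleton without crossing the wall of k0 *)
Definition halfside (k0 : rep * rep) (start v : rep) : Prop :=
  clos_refl_trans _ (fun x y => req x y \/ (onecube x y /\ ~ parallel k0 (x, y))) start v.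

Definition ladder (n j k : nat) (s t : nat -> ('I_n.+1 + 'I_j)%type) : graph := {|
  gV := ('I_n.+1 + 'I_j)%type;
  gE := (('I_n + 'I_n) + 'I_k)%type;
  gsrc := fun e => match e with
                   | inl (inl i) => inl (inord i) | inl (inr i) => inl (inord i.+1)
                   | inr k => s (val k) end;
  gtgt := fun e => match e with
                   | inl (inl i) => inl (inord i.+1) | inl (inr i) => inl (inord i)
                   | inr k => t (val k) end |}.

Definition U n j (i : nat) : ('I_n.+1 + 'I_j)%type := inl (inord i).
Definition X n j (i : nat) : ('I_n.+1 + 'I_j.+1)%type := inr (inord i).

(* J_n: edges u_i -> u_{i+1}, u_{i+1} -> u_i, then v w x y z a b c d e = 0..9;
   extra vertices p q l m = 0..3 *)
Definition J (n : nat) : graph := @ladder n 4 10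
  (fun k => match k with 0 => U n 4 0 | 1 | 2 => X n 3 0 | 3 | 4 => X n 3 1
            | 5 => U n 4 n | 6 | 7 => X n 3 2 | _ => X n 3 3 end)
  (fun k => match k with 0 | 1 => X n 3 0 | 2 | 3 => X n 3 1 | 4 => U n 4 0
            | 5 | 6 => X n 3 2 | 7 | 8 => X n 3 3 | _ => U n 4 n end).

(* J_n with x,y,z contracted to a new edge N : p -> u_0.
   edges v w N a b c d e = 0..7 ; vertices p l m = 0..2 *)
Definition J1 (n : nat) : graph := @ladder n 3 8
  (fun k => match k with 0 => U n 3 0 | 1 | 2 => X n 2 0 | 3 => U n 3 n
            | 4 | 5 => X n 2 1 | _ => X n 2 2 end)
  (fun k => match k with 0 | 1 => X n 2 0 | 2 => U n 3 0 | 3 | 4 => X n 2 1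
            | 5 | 6 => X n 2 2 | _ => U n 3 n end).

(* J_n with c,d,e contracted to a new edge N : l -> u_n.
   edges v w x y z a b N = 0..7 ; vertices p q l = 0..2 *)
Definition J2 (n : nat) : graph := @ladder n 3 8
  (fun k => match k with 0 => U n 3 0 | 1 | 2 => X n 2 0 | 3 | 4 => X n 2 1
            | 5 => U n 3 n | _ => X n 2 2 end)
  (fun k => match k with 0 | 1 => X n 2 0 | 2 | 3 => X n 2 1 | 4 => U n 3 0
            | 5 | 6 => X n 2 2 | _ => U n 3 n end).

Definition nab1 (n : nat) (a : addr (J n)) : addr (J1 n) :=
  match a.1 with
  | inl e => ((inl e : gE (J1 n)), a.2)
  | inr k =>
      if val k < 2 then ((inr (inord (val k)) : gE (J1 n)), a.2)
      else if val k < 5 then ((inr (inord 2) : gE (J1 n)), (inord (val k - 2) : 'I_3) :: a.2)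
      else ((inr (inord (val k - 2)) : gE (J1 n)), a.2)
  end.

Definition nab2 (n : nat) (a : addr (J n)) : addr (J2 n) :=
  match a.1 with
  | inl e => ((inl e : gE (J2 n)), a.2)
  | inr k =>
      if val k < 7 then ((inr (inord (val k)) : gE (J2 n)), a.2)
      else ((inr (inord 7) : gE (J2 n)), (inord (val k - 7) : 'I_3) :: a.2)
  end.

(* half-space of wall H_i (i = 1,2) of sign d (true = +, false = -) for f_n *)
Definition Hhalf (n : nat) (fn : addr G0 -> addr (J n)) (i : nat) (d : bool) (v : rep) : Prop :=
  let f0 := Rep fn in
  let g := if i == 1 then Rep (fun x => nab1 (fn x)) else Rep (fun x => nab2 (fn x)) in
  halfside (f0, g) (if d then f0 else g) v.

(* Main.v *)
Require Import Defs.
From Stdlib Require Import Relation_Operators.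
From mathcomp Require Import all_boot.
Set Implicit Arguments. Unset Strict Implicit. Unset Printing Implicit Defensive.

Lemma map_rem_inj (T U : eqType) (f : T -> U) (x : T) (s : seq T) :
  injective f -> map f (rem x s) = rem (f x) (map f s).
Proof.
move=> fi; elim: s => //= y s IH; rewrite (inj_eq fi); case: eqP => //= _; by rewrite IH.
Qed.

Lemma perm_rem2 (T : eqType) (x : T) (s t : seq T) :
  x \in s -> perm_eq s t -> perm_eq (rem x s) (rem x t).
Proof.
move=> xs st.
have xt : x \in t by rewrite -(perm_mem st).
have := perm_to_rem xs; have := perm_to_rem xt => Ht Hs.
rewrite -(perm_cons x); apply: perm_trans (perm_trans _ st) Ht.
by rewrite perm_sym.
Qed.

Lemma exp_cover (G : graph) (C : seq (addr G)) : is_exp C ->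
  exists N, (forall c, c \in C -> size c.2 <= N) /\
   forall a : addr G, N <= size a.2 -> exists c w, c \in C /\ a = acat c w.
Proof.
elim=> [|C0 a0 a0C _ [N [HN HC]]].
  exists 0; split.
    by move=> c /mapP [e _ ->].
  move=> [e u] _; exists (e, [::]), u; split => //.
  by apply/mapP; exists e => //; rewrite mem_enum.
exists N.+1; split.
  move=> c; rewrite mem_cat => /orP [/mapP [i _ ->]|/mem_rem cC].
    by rewrite /acat /= size_cat /= addn1 ltnS HN.
  by apply: leqW; apply: HN.
move=> a Ha; have [c [w [cC Ea]]] := HC a (ltnW Ha); subst a.
case: (eqVneq c a0) => [ea|na].
  subst c; case: w Ha => [|i w] Ha.
    by move: Ha; rewrite /acat /= cats0 ltnNge (HN _ a0C).
  exists (acat a0 [:: i]), w; split.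
    by rewrite mem_cat; apply/orP; left; apply/mapP; exists i => //; rewrite mem_enum.
  by rewrite /acat /= -catA.
exists c, w; split => //; rewrite mem_cat; apply/orP; right; exact: rem_mem.
Qed.

Lemma exp_edge (G : graph) (C : seq (addr G)) (e : gE G) : is_exp C ->
  exists2 c, c \in C & c.1 = e.
Proof.
move=> /exp_cover [N [_ H]].
have := H (e, nseq N ord0); rewrite size_nseq => /(_ (leqnn _)) [c [w [cC E]]].
by exists c => //; move: (f_equal fst E).
Qed.

Definition evq (G : graph) (T : Type) (P Q : addr G -> T) : Prop :=
  exists N, forall a : addr G, N <= size a.2 -> P a = Q a.

Lemma evq_sym G T (P Q : addr G -> T) : evq P Q -> evq Q P.
Proof. by move=> [N H]; exists N => a /H ->. Qed.

Lemma evq_trans G T (P Q R : addr G -> T) : evq P Q -> evq Q R -> evq P R.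
Proof.
move=> [N1 H1] [N2 H2]; exists (maxn N1 N2) => a Ha.
rewrite H1 ?H2 //; apply: leq_trans Ha; by rewrite ?leq_maxl ?leq_maxr.
Qed.

Lemma ev_eq_evq (G G' : graph) (F F' : addr G -> addr G') :
  ev_eq F F' -> evq F F'.
Proof.
move=> [C [HC H]]; have [N [_ HN]] := exp_cover HC.
by exists N => a /HN [c [w [cC ->]]]; apply: H.
Qed.

Definition sz (r : rep) (a : addr G0) : nat := size (rF r a).2.

Lemma req_sz a b : req a b -> evq (sz a) (sz b).
Proof.
move=> [iV [iE [_ /ev_eq_evq [N H]]]]; exists N => x /H.
by rewrite /sz => ->.
Qed.

Definition D (k : rep * rep) (a : addr G0) : bool := sz k.1 a != sz k.2 a.

Lemma same1_D k k' : same1 k k' -> evq (D k) (D k').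
Proof.
case=> [[H1 H2]|[H1 H2]].
  have [N1 E1] := req_sz H1; have [N2 E2] := req_sz H2.
  exists (maxn N1 N2) => a Ha; rewrite /D E1 ?E2 //; apply: leq_trans Ha;
    by rewrite ?leq_maxl ?leq_maxr.
have [N1 E1] := req_sz H1; have [N2 E2] := req_sz H2.
exists (maxn N1 N2) => a Ha; rewrite /D E1 ?E2 1?eq_sym //; apply: leq_trans Ha;
  by rewrite ?leq_maxl ?leq_maxr.
Qed.

Lemma delta_in (G : graph) (T : {set gE G}) (a : addr G) (H : a.1 \in T) :
  delta_addr T a = ((inr (exist (fun x => x \in T) a.1 H, head ord0 a.2) : gE (expG T)), behead a.2).
Proof.
rewrite /delta_addr; move: (erefl (a.1 \in T)).
case: {2 3}(a.1 \in T).
  by move=> H'; rewrite (eq_irrelevance H H').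
by move=> H'; exfalso; move: H; rewrite H'.
Qed.

Lemma delta_out (G : graph) (T : {set gE G}) (a : addr G) (H : a.1 \notin T) :
  delta_addr T a = ((inl (exist (fun x => x \notin T) a.1 H) : gE (expG T)), a.2).
Proof.
rewrite /delta_addr; move: (erefl (a.1 \in T)).
case: {2 3}(a.1 \in T).
  by move=> H'; exfalso; move: H; rewrite H'.
by move=> H'; rewrite (eq_irrelevance H (negbT H')).
Qed.

Lemma size_delta (G : graph) (T : {set gE G}) (a : addr G) :
  size (delta_addr T a).2 = if a.1 \in T then (size a.2).-1 else size a.2.
Proof.
case: (boolP (a.1 \in T)) => H; first by rewrite (delta_in H) size_behead.
by rewrite (delta_out H).
Qed.

Lemma D_opp (g : rep) (e e' : gE (rG g)) : e != e' ->
  D (g, dl [set e]) =1 D (dl [set e'], dl [set e; e']).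
Proof.
move=> ne a; rewrite /D /sz /= !size_delta !inE.
case: (eqVneq (rF g a).1 e) => [->|n1] /=; first by rewrite (negbTE ne).
rewrite eqxx; case: (_ == e') => /=; by rewrite eqxx.
Qed.

Lemma evq_ext G T (P Q : addr G -> T) : P =1 Q -> evq P Q.
Proof. by move=> H; exists 0 => a _; apply: H. Qed.

Lemma parallel_D k0 k : parallel k0 k -> evq (D k0) (D k).
Proof.
elim=> [x y [[g [e [e' [_ ne S1 S2]]]]|S]|x|x y _ IH|x y z _ IH1 _ IH2].
- apply: evq_trans (same1_D S1) _; apply: evq_trans (evq_ext (D_opp ne)) _.
  exact: evq_sym (same1_D S2).
- exact: same1_D.
- exact: evq_ext.
- exact: evq_sym.
- exact: evq_trans IH1 IH2.
Qed.

Lemma req_refl (r : rep) : req r r.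
Proof.
exists id, id; split.
  by split; try exists id.
by exists [seq (e, [::]) | e <- enum (gE G0)]; split; [exact: exp_base| move=> c w _; case: (rF r _)].
Qed.

Lemma endp_aux_map (G G' : graph) (e : gE G) (e2 : gE G') (p0 : seq 'I_3)
  (psi : vtx G -> vtx G') :
  (forall p, psi (inr (e, p)) = inr (e2, p0 ++ p)) ->
  forall w pre s t, endp_aux e2 (p0 ++ pre) (psi s) (psi t) w =
     (psi (endp_aux e pre s t w).1, psi (endp_aux e pre s t w).2).
Proof.
move=> Hp; elim=> [|i w IH] pre s t //=.
rewrite rcons_cat -Hp.
by case: ifP => _; [|case: ifP => _]; rewrite /= IH.
Qed.

Section Contr.
Variables (G G' : graph) (N : gE G').
Variables (iV : gV G -> gV (expG [set N])) (iE : gE G -> gE (expG [set N])).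
Hypothesis Hiso : giso iV iE.

Definition hh (x : gE (expG [set N])) (u : seq 'I_3) : addr G' :=
  match x with inl e' => (val e', u) | inr (s, i) => (val s, i :: u) end.
Definition hc (a : addr G) : addr G' := hh (iE a.1) a.2.

Definition vmap (x : vtx G) : vtx G' :=
  match x with
  | inl v => match iV v with inl v' => inl v' | inr s => inr (val s, [::]) end
  | inr a => inr (hc a) end.

Lemma hc_acat a w : hc (acat a w) = acat (hc a) w.
Proof. by rewrite /hc /acat /=; case: (iE a.1) => [e'|[s i]]. Qed.

Lemma iE_inj : injective iE.
Proof. by case: Hiso => _ /bij_inj. Qed.
Lemma iV_inj : injective iV.
Proof. by case: Hiso => /bij_inj. Qed.

Lemma valN (s : {x : gE G' | x \in [set N]}) : val s = N.
Proof. by case: s => x /=; rewrite inE => /eqP. Qed.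

Lemma hc_inj : injective hc.
Proof.
move=> [e1 u1] [e2 u2]; rewrite /hc /=.
case E1: (iE e1) => [x1|[s1 i1]]; case E2: (iE e2) => [x2|[s2 i2]] /= [].
- move=> /val_inj Ex ->; by rewrite Ex -E2 in E1; rewrite (iE_inj E1).
- by case: x1 {E1} => x /= H; rewrite valN => Ex; move: H; rewrite Ex inE eqxx.
- by case: x2 {E2} => x /= H; rewrite valN => Ex; move: H; rewrite -Ex inE eqxx.
- move=> /val_inj Es [Ei ->]; subst; by rewrite -E2 in E1; rewrite (iE_inj E1).
Qed.

Lemma vmap_inj : injective vmap.
Proof.
have hcN : forall a, hc a <> (N, [::]).
  move=> [e u]; rewrite /hc /=; case: (iE e) => [[x H]|[s i]] //= [Ex _].
  by move: H; rewrite Ex inE eqxx.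
move=> [v1|a1] [v2|a2] /=.
- case E1: (iV v1) => [x1|s1]; case E2: (iV v2) => [x2|s2] //.
    by case=> Ex; rewrite Ex -E2 in E1; rewrite (iV_inj E1).
  case=> /val_inj Es; by rewrite Es -E2 in E1; rewrite (iV_inj E1).
- case: (iV v1) => // s [Es]; by rewrite valN in Es; move/esym: Es; move/hcN.
- case: (iV v2) => // s [Es]; by rewrite valN in Es; move: Es; move/hcN.
- by case=> /hc_inj ->.
Qed.

Lemma endp_hc a : endp (hc a) = (vmap (endp a).1, vmap (endp a).2).
Proof.
case: Hiso => _ _ Hst.
case: a => e u; rewrite /endp /hc /=.
have [Hs Ht] := Hst e.
case E: (iE e) Hs Ht => [e'|[s j]] /= Hs Ht.
- have L := @endp_aux_map G G' e (val e') [::] vmap _ u [::] (inl (gsrc e)) (inl (gtgt e)).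
  rewrite /= -Hs -Ht /= in L; rewrite -L //.
  by move=> p; rewrite /= /hc /= E.
- have L := @endp_aux_map G G' e (val s) [:: j] vmap _ u [::] (inl (gsrc e)) (inl (gtgt e)).
  rewrite /= -Hs -Ht /= in L; rewrite -L //.
    rewrite /= (valN s).
    by case: j {E Hs Ht L} => [[|[|[|m]]] Hm] //=; rewrite ?(valN s).
  by move=> p; rewrite /= /hc /= E.
Qed.

Lemma iE_surj y : exists e, iE e = y.
Proof. case: Hiso => _ [g _ K] _; by exists (g y); rewrite K. Qed.
Lemma iV_surj y : exists v, iV v = y.
Proof. case: Hiso => [[g _ K]] _ _; by exists (g y); rewrite K. Qed.

Definition sN : {x : gE G' | x \in [set N]} := exist _ N (set11 N).

Lemma exp_map C : is_exp C -> exists C2, is_exp C2 /\ perm_eq (map hc C) C2.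
Proof.
elim=> [|C0 a aC _ [C2 [HC2 P2]]].
  pose B := [seq ((e, [::]) : addr G') | e <- enum (gE G')].
  have NB : ((N, [::]) : addr G') \in B by apply/mapP; exists N => //; rewrite mem_enum.
  exists ([seq acat (N, [::]) [:: i] | i <- enum 'I_3] ++ rem (N, [::]) B); split.
    by apply: exp_step => //; apply: exp_base.
  have uB : uniq B by rewrite map_inj_uniq ?enum_uniq // => x y [].
  apply: uniq_perm.
  - rewrite map_inj_uniq; last exact: hc_inj.
    by rewrite map_inj_uniq ?enum_uniq // => x y [].
  - rewrite cat_uniq rem_uniq // map_inj_uniq ?enum_uniq ?andbT; last by move=> x y [].
    apply/hasPn => z /mem_rem /mapP [e _ ->]; by apply/negP => /mapP [i _] [].
  - move=> x; apply/idP/idP.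
      move=> /mapP [c /mapP [e _ ->] ->]; rewrite /hc /=.
      case E: (iE e) => [e'|[s j]] /=; rewrite mem_cat; apply/orP.
        right; apply: rem_mem; last by apply/mapP; exists (val e') => //; rewrite mem_enum.
        by case: e' {E} => y0 /= H; apply/eqP => [[Ex]]; move: H; rewrite Ex inE eqxx.
      by left; apply/mapP; exists j; rewrite ?mem_enum // valN.
    rewrite mem_cat => /orP [/mapP [i _ ->]|].
      have [e E] := iE_surj (inr (sN, i)).
      by apply/mapP; exists (e, [::]); [apply/mapP; exists e; rewrite ?mem_enum| rewrite /hc /= E].
    move=> xr; have := mem_rem xr; move=> /mapP [e' _ Ex]; subst x.
    have He' : e' \notin [set N].
      by rewrite inE; apply/eqP => Ee; move: xr; rewrite Ee mem_rem_uniqF.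
    have [e E] := iE_surj (inl (exist _ e' He')).
    by apply/mapP; exists (e, [::]); [apply/mapP; exists e; rewrite ?mem_enum| rewrite /hc /= E].
have haC2 : hc a \in C2 by rewrite -(perm_mem P2); apply: map_f.
exists ([seq acat (hc a) [:: i] | i <- enum 'I_3] ++ rem (hc a) C2); split.
  exact: exp_step.
rewrite map_cat -map_comp (eq_map (fun i => hc_acat a [:: i])).
rewrite perm_cat2l map_rem_inj; last exact: hc_inj.
by apply: perm_rem2 => //; apply: map_f.
Qed.

Lemma sprefix_hc a c : sprefix a c -> sprefix (hc a) (hc c).
Proof.
case: a c => [e u] [e' u'] [/= <-] [i [w /= ->]].
have -> : ((e, u ++ i :: w) : addr G) = acat (e, u) (i :: w) by [].
by rewrite hc_acat; split => //; exists i, w.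
Qed.

Lemma contr_rearr (G1 : graph) (F : addr G1 -> addr G) (h : addr G1 -> addr G') :
  is_rearr F -> (forall x, h x = hc (F x)) -> is_rearr h.
Proof.
move=> [C [C' [sigma [phi [HC HC' [Hp Hi Hin Hsur Hend] HF]]]]] hE.
have [C2 [HC2 P2]] := exp_map HC'.
have memC2 : forall x, (x \in C2) = (x \in map hc C') by move=> x; rewrite (perm_mem P2).
have vin_map : forall y, vin C' y -> vin C2 (vmap y).
  case=> [v|a] /=.
    case E: (iV v) => [v'|s] // _.
    have [e Ee] := iE_surj (inr (s, ord0)).
    have [c cC ce] := exp_edge e HC'.
    exists (hc c); first by rewrite memC2 map_f.
    rewrite /hc ce Ee /=; split => //; by exists ord0, c.2.
  move=> [c cC Hac]; exists (hc c); first by rewrite memC2 map_f.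
  exact: sprefix_hc.
have vin_surj : forall y, vin C2 y -> exists y', vin C' y' /\ vmap y' = y.
  case=> [v'|[b1 b2]] /=.
    have [v Ev] := iV_surj (inl v'); by exists (inl v); rewrite /= Ev.
  move=> [c2]; rewrite memC2 => /mapP [[e u] cC ->]; rewrite /hc /=.
  case E: (iE e) => [e'|[s j]] /= [/= Eb [i [w Eu]]]; subst b1.
    exists (inr (e, b2)); split; last by rewrite /= /hc /= E.
    by exists (e, u) => //; split => //; exists i, w.
  case: b2 Eu => [|j' b2] /= [Ej Eu].
    have [v Ev] := iV_surj (inr s); by exists (inl v); rewrite /= Ev.
  subst j'; exists (inr (e, b2)); split; last by rewrite /= /hc /= E.
  by exists (e, u) => //; split => //; exists i, w.
exists C, C2, (fun c => hc (sigma c)), (fun x => vmap (phi x)); split => //.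
  split.
  - by rewrite (map_comp hc sigma); apply: perm_trans P2; rewrite perm_map.
  - by move=> x y Hx Hy /vmap_inj; apply: Hi.
  - by move=> x /Hin /vin_map.
  - move=> y /vin_surj [y' [Hy' <-]]; have [x [Hx <-]] := Hsur _ Hy'.
    by exists x.
  - by move=> c cC; rewrite endp_hc Hend.
by move=> c w cC; rewrite hE HF // hc_acat.
Qed.

Lemma contr_req (F : addr G0 -> addr G) (H : addr G0 -> addr G') :
  (forall x, H x = hc (F x)) -> req (Rep F) (@dl (Rep H) [set N]).
Proof.
move=> hE; exists iV, iE; split => //.
exists [seq (e, [::]) | e <- enum (gE G0)]; split; first exact: exp_base.
move=> c w _; rewrite /= hE /hc.
case: (iE _) => [[e' He']|[s j]] /=.
  by rewrite delta_out.
rewrite delta_in; first by rewrite valN inE.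
move=> Hs /=; congr (inr (_, _), _); by apply: val_inj; rewrite /= valN.
Qed.
End Contr.

Section LadderIso.
Variables (n j k j' k' : nat) (s t : nat -> ('I_n.+1 + 'I_j)%type)
  (s' t' : nat -> ('I_n.+1 + 'I_j')%type) (N : 'I_k').
Variables (mv : 'I_j -> option 'I_j') (me : 'I_k -> ('I_k' + 'I_3)%type)
  (mvi : 'I_j' -> 'I_j) (mid : 'I_j) (mei : 'I_k' -> 'I_k) (ch : 'I_3 -> 'I_k).

Definition LL := @ladder n j k s t.
Definition LL' := @ladder n j' k' s' t'.
Definition NN : gE LL' := inr N.
Definition TT : {set gE LL'} := [set NN].

Definition sNN : {x : gE LL' | x \in TT} := exist _ NN (set11 NN).

Lemma sNN_uniq (x : {x : gE LL' | x \in TT}) : x = sNN.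
Proof. by apply: val_inj; case: x => y /=; rewrite inE => /eqP. Qed.

Definition lV (x : gV LL) : gV (expG TT) :=
  match x with
  | inl i => inl (inl i)
  | inr z => match mv z with Some z' => inl (inr z') | None => inr sNN end end.

Lemma notN_l (l : ('I_n + 'I_n)%type) : (inl l : gE LL') \notin TT.
Proof. by rewrite inE. Qed.

Definition lE (x : gE LL) : gE (expG TT) :=
  match x with
  | inl l => inl (exist _ (inl l : gE LL') (notN_l l))
  | inr y => match me y with
      | inl y' => match insub (inr y' : gE LL') with Some z => inl z | None => inr (sNN, ord0) end
      | inr i => inr (sNN, i) end end.

Hypothesis Hmv1b : forall z, match mv z with Some z' => mvi z' == z | None => z == mid end.
Hypothesis Hmv2b : forall z', mv (mvi z') == Some z'.
Hypothesis Hmidb : mv mid == None.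
Hypothesis Hme1 : forall y, match me y with inl y' => (y' != N) && (mei y' == y) | inr i => ch i == y end.
Hypothesis Hme2b : forall y', y' != N -> me (mei y') == inl y'.
Hypothesis Hme3b : forall i, me (ch i) == inr i.
Hypothesis Hs : forall y : 'I_k, match me y with
   | inl y' => inl (s' y') = lV (s y)
   | inr i => (if val i == 0 then inl (s' N) else inr sNN) = lV (s y) end.
Hypothesis Ht : forall y : 'I_k, match me y with
   | inl y' => inl (t' y') = lV (t y)
   | inr i => (if val i == 2 then inl (t' N) else inr sNN) = lV (t y) end.

Lemma Hmv1 z : match mv z with Some z' => mvi z' = z | None => z = mid end.
Proof. by have := Hmv1b z; case: (mv z) => [?|] /eqP. Qed.
Lemma Hmv2 z' : mv (mvi z') = Some z'.
Proof. exact/eqP. Qed.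
Lemma Hmid : mv mid = None.
Proof. exact/eqP. Qed.
Lemma Hme2 y' : y' != N -> me (mei y') = inl y'.
Proof. by move/Hme2b/eqP. Qed.
Lemma Hme3 i : me (ch i) = inr i.
Proof. exact/eqP. Qed.

Lemma notN_r (y' : 'I_k') : y' != N -> (inr y' : gE LL') \notin TT.
Proof. by move=> H; rewrite inE; apply/eqP => [[E]]; move/eqP: H. Qed.

Lemma insub_r (y' : 'I_k') (H : y' != N) :
  insub (inr y' : gE LL') = Some (exist (fun x => x \notin TT) (inr y' : gE LL') (notN_r H)).
Proof. exact: insubT. Qed.

Lemma lE_r y : lE (inr y) = match me y with
   | inl y' => if insub (inr y' : gE LL') is Some z then inl z else inr (sNN, ord0)
   | inr i => inr (sNN, i) end.
Proof. by []. Qed.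

Lemma lad_giso : giso lV lE.
Proof.
split.
- pose g (x : gV (expG TT)) : gV LL :=
    match x with inl (inl i) => inl i | inl (inr z') => inr (mvi z') | inr _ => inr mid end.
  exists g.
    case=> [i|z] //=; have := Hmv1 z; case: (mv z) => [z'|] /= -> //.
  case=> [[i|z']|x] //=; first by rewrite Hmv2.
  by rewrite Hmid (sNN_uniq x).
- pose g (x : gE (expG TT)) : gE LL :=
    match x with
    | inl z => match val z with inl l => inl l | inr y' => inr (mei y') end
    | inr (_, i) => inr (ch i) end.
  exists g.
    case=> [l|y] //; rewrite lE_r; have := Hme1 y; case: (me y) => [y'|i].
      by move=> /andP [Hy /eqP <-]; rewrite (insub_r Hy).
    by move=> /eqP <-.
  case=> [[[l|y'] Hz]|[x i]] /=.
  - by congr inl; apply: val_inj.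
  - have Hy : y' != N by apply/eqP => E; move: Hz; rewrite E inE eqxx.
    rewrite Hme2 // (insub_r Hy); congr inl; exact: val_inj.
  - by rewrite Hme3 (sNN_uniq x).
- case=> [[l|l]|y] //.
  rewrite lE_r; have := Hme1 y; have := Hs y; have := Ht y; case: (me y) => [y'|i].
    move=> Et Es /andP [Hy _]; rewrite (insub_r Hy) /=; split; [exact: Es | exact: Et].
  move=> Et Es _ /=; split; [exact: Es|exact: Et].
Qed.

Lemma hc_lE (l : ('I_n + 'I_n)%type) u : hc lE (inl l, u) = (inl l, u).
Proof. by []. Qed.

Lemma hc_lEr (y : 'I_k) u : hc lE (inr y, u) =
  match me y with inl y' => (inr y', u) | inr i => (NN, i :: u) end.
Proof.
rewrite /hc [lE _]lE_r; have := Hme1 y; case: (me y) => [y'|i] //.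
by move=> /andP [Hy _]; rewrite (insub_r Hy).
Qed.
End LadderIso.

Lemma ordP (m : nat) (P : 'I_m -> Prop) :
  (forall i (H : i < m), P (Ordinal H)) -> forall x, P x.
Proof. by move=> H [i Hi]. Qed.

Unset Implicit Arguments.

Definition sJ n := (fun k => match k with 0 => U n 4 0 | 1 | 2 => X n 3 0 | 3 | 4 => X n 3 1
            | 5 => U n 4 n | 6 | 7 => X n 3 2 | _ => X n 3 3 end).
Definition tJ n := (fun k => match k with 0 | 1 => X n 3 0 | 2 | 3 => X n 3 1 | 4 => U n 4 0
            | 5 | 6 => X n 3 2 | 7 | 8 => X n 3 3 | _ => U n 4 n end).
Definition sJ1 n := (fun k => match k with 0 => U n 3 0 | 1 | 2 => X n 2 0 | 3 => U n 3 n
            | 4 | 5 => X n 2 1 | _ => X n 2 2 end).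
Definition tJ1 n := (fun k => match k with 0 | 1 => X n 2 0 | 2 => U n 3 0 | 3 | 4 => X n 2 1
            | 5 | 6 => X n 2 2 | _ => U n 3 n end).


Definition sJ2 n := (fun k => match k with 0 => U n 3 0 | 1 | 2 => X n 2 0 | 3 | 4 => X n 2 1
            | 5 => U n 3 n | _ => X n 2 2 end).
Definition tJ2 n := (fun k => match k with 0 | 1 => X n 2 0 | 2 | 3 => X n 2 1 | 4 => U n 3 0
            | 5 | 6 => X n 2 2 | _ => U n 3 n end).
Definition sJ12 n := (fun k => match k with 0 => U n 2 0 | 1 | 2 => X n 1 0 | 3 => U n 2 n
            | _ => X n 1 1 end).
Definition tJ12 n := (fun k => match k with 0 | 1 => X n 1 0 | 2 => U n 2 0 | 3 | 4 => X n 1 1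
            | _ => U n 2 n end).
Definition J12 n : graph := @ladder n 2 6 (sJ12 n) (tJ12 n).
Definition cord (N m : nat) : 'I_N.+1 := Ordinal (ltn_pmod m (ltn0Sn N)).
Lemma inord_cord N m : m < N.+1 -> inord m = cord N m.
Proof. by move=> H; apply: val_inj; rewrite /= inordK // modn_small. Qed.
Definition nab3 n (a : addr (J n)) : addr (J1 n) :=
  match a.1 with
  | inl e => ((inl e : gE (J1 n)), a.2)
  | inr k => if val k < 3 then ((inr (cord 7 0) : gE (J1 n)), cord 2 k :: a.2)
             else ((inr (cord 7 (k - 2)) : gE (J1 n)), a.2)
  end.
Definition c12 n (a : addr (J1 n)) : addr (J12 n) :=
  match a.1 with
  | inl e => ((inl e : gE (J12 n)), a.2)
  | inr k => if val k < 5 then ((inr (cord 5 k) : gE (J12 n)), a.2)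
             else ((inr (cord 5 5) : gE (J12 n)), cord 2 (k - 5) :: a.2)
  end.
Ltac cmp := rewrite /nab1 /nab2 /nab3 /c12 /= /X /U ?inord_cord ?ltnSn //.
Ltac ordcase m := apply: ordP; do m! (let i := fresh "i" in intros [|i]; [intro; cmp | revert i]);
  let H := fresh "H" in intros ? H; discriminate H.
(* instance 1: contract x,y,z of J to edge 2 of J1 *)
Definition mv1 (z : 'I_4) : option 'I_3 :=
  match val z with 0 => Some (cord 2 0) | 1 => None | 2 => Some (cord 2 1) | _ => Some (cord 2 2) end.
Definition mvi1 (z : 'I_3) : 'I_4 :=
  match val z with 0 => cord 3 0 | 1 => cord 3 2 | _ => cord 3 3 end.
Definition me1 (y : 'I_10) : ('I_8 + 'I_3)%type :=
  match val y with 0 => inl (cord 7 0) | 1 => inl (cord 7 1) | 2 => inr (cord 2 0)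
  | 3 => inr (cord 2 1) | 4 => inr (cord 2 2) | m => inl (cord 7 (m - 2)) end.
Definition mei1 (y : 'I_8) : 'I_10 :=
  match val y with 0 => cord 9 0 | 1 => cord 9 1 | m => cord 9 (m + 2) end.
Definition ch1 (i : 'I_3) : 'I_10 := cord 9 (i + 2).

Definition iV1 n := @lV n 4 10 3 8 (sJ n) (tJ n) (sJ1 n) (tJ1 n) (cord 7 2) mv1.
Definition iE1 n := @lE n 4 10 3 8 (sJ n) (tJ n) (sJ1 n) (tJ1 n) (cord 7 2) me1.
Lemma iso1 n : giso (iV1 n) (iE1 n).
Proof.
apply: (@lad_giso n 4 10 3 8 (sJ n) (tJ n) (sJ1 n) (tJ1 n) (cord 7 2) mv1 me1 mvi1 (cord 3 1) mei1 ch1).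
- ordcase 4.
- ordcase 3.
- by [].
- ordcase 10.
- ordcase 8.
- ordcase 3.
- ordcase 10.
- ordcase 10.
Qed.

Lemma me1_ok : forall y, match me1 y with inl y' => (y' != cord 7 2) && (mei1 y' == y) | inr i => ch1 i == y end.
Proof. ordcase 10. Qed.

Lemma nab1_spec n a : nab1 a = hc (iE1 n) a.
Proof.
case: a => [[l|y] u] //.
rewrite /iE1 (hc_lEr (sJ n) (tJ n) (sJ1 n) (tJ1 n) me1_ok).
move: y; ordcase 10.
Qed.

(* instance 2: contract c,d,e of J to edge 7 of J2 *)
Definition mv2 (z : 'I_4) : option 'I_3 :=
  match val z with 0 => Some (cord 2 0) | 1 => Some (cord 2 1) | 2 => Some (cord 2 2) | _ => None end.
Definition mvi2 (z : 'I_3) : 'I_4 := cord 3 z.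
Definition me2 (y : 'I_10) : ('I_8 + 'I_3)%type :=
  match val y with 7 => inr (cord 2 0) | 8 => inr (cord 2 1) | 9 => inr (cord 2 2)
  | m => inl (cord 7 m) end.
Definition mei2 (y : 'I_8) : 'I_10 := cord 9 y.
Definition ch2 (i : 'I_3) : 'I_10 := cord 9 (i + 7).
Definition iV2 n := @lV n 4 10 3 8 (sJ n) (tJ n) (sJ2 n) (tJ2 n) (cord 7 7) mv2.
Definition iE2 n := @lE n 4 10 3 8 (sJ n) (tJ n) (sJ2 n) (tJ2 n) (cord 7 7) me2.
Lemma iso2 n : giso (iV2 n) (iE2 n).
Proof.
apply: (@lad_giso n 4 10 3 8 (sJ n) (tJ n) (sJ2 n) (tJ2 n) (cord 7 7) mv2 me2 mvi2 (cord 3 3) mei2 ch2).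
- ordcase 4.
- ordcase 3.
- by [].
- ordcase 10.
- ordcase 8.
- ordcase 3.
- ordcase 10.
- ordcase 10.
Qed.
Lemma me2_ok : forall y, match me2 y with inl y' => (y' != cord 7 7) && (mei2 y' == y) | inr i => ch2 i == y end.
Proof. ordcase 10. Qed.
Lemma nab2_spec n a : nab2 a = hc (iE2 n) a.
Proof.
case: a => [[l|y] u] //.
rewrite /iE2 (hc_lEr (sJ n) (tJ n) (sJ2 n) (tJ2 n) me2_ok).
move: y; ordcase 10.
Qed.

(* instance 3: contract v,w,x of J to edge 0 of J1 *)
Definition mv3 (z : 'I_4) : option 'I_3 :=
  match val z with 0 => None | 1 => Some (cord 2 0) | 2 => Some (cord 2 1) | _ => Some (cord 2 2) end.
Definition mvi3 (z : 'I_3) : 'I_4 := cord 3 z.+1.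
Definition me3 (y : 'I_10) : ('I_8 + 'I_3)%type :=
  match val y with 0 => inr (cord 2 0) | 1 => inr (cord 2 1) | 2 => inr (cord 2 2)
  | m => inl (cord 7 (m - 2)) end.
Definition mei3 (y : 'I_8) : 'I_10 := cord 9 (y + 2).
Definition ch3 (i : 'I_3) : 'I_10 := cord 9 i.
Definition iV3 n := @lV n 4 10 3 8 (sJ n) (tJ n) (sJ1 n) (tJ1 n) (cord 7 0) mv3.
Definition iE3 n := @lE n 4 10 3 8 (sJ n) (tJ n) (sJ1 n) (tJ1 n) (cord 7 0) me3.
Lemma iso3 n : giso (iV3 n) (iE3 n).
Proof.
apply: (@lad_giso n 4 10 3 8 (sJ n) (tJ n) (sJ1 n) (tJ1 n) (cord 7 0) mv3 me3 mvi3 (cord 3 0) mei3 ch3).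
- ordcase 4.
- ordcase 3.
- by [].
- ordcase 10.
- ordcase 8.
- ordcase 3.
- ordcase 10.
- ordcase 10.
Qed.
Lemma me3_ok : forall y, match me3 y with inl y' => (y' != cord 7 0) && (mei3 y' == y) | inr i => ch3 i == y end.
Proof. ordcase 10. Qed.
Lemma nab3_spec n a : nab3 n a = hc (iE3 n) a.
Proof.
case: a => [[l|y] u] //.
rewrite /iE3 (hc_lEr (sJ n) (tJ n) (sJ1 n) (tJ1 n) me3_ok).
move: y; ordcase 10.
Qed.

(* instance 4: contract c,d,e of J1 to edge 5 of J12 *)
Definition mv4 (z : 'I_3) : option 'I_2 :=
  match val z with 0 => Some (cord 1 0) | 1 => Some (cord 1 1) | _ => None end.
Definition mvi4 (z : 'I_2) : 'I_3 := cord 2 z.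
Definition me4 (y : 'I_8) : ('I_6 + 'I_3)%type :=
  match val y with 5 => inr (cord 2 0) | 6 => inr (cord 2 1) | 7 => inr (cord 2 2)
  | m => inl (cord 5 m) end.
Definition mei4 (y : 'I_6) : 'I_8 := cord 7 y.
Definition ch4 (i : 'I_3) : 'I_8 := cord 7 (i + 5).
Definition iV4 n := @lV n 3 8 2 6 (sJ1 n) (tJ1 n) (sJ12 n) (tJ12 n) (cord 5 5) mv4.
Definition iE4 n := @lE n 3 8 2 6 (sJ1 n) (tJ1 n) (sJ12 n) (tJ12 n) (cord 5 5) me4.
Lemma iso4 n : giso (iV4 n) (iE4 n).
Proof.
apply: (@lad_giso n 3 8 2 6 (sJ1 n) (tJ1 n) (sJ12 n) (tJ12 n) (cord 5 5) mv4 me4 mvi4 (cord 2 2) mei4 ch4).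
- ordcase 3.
- ordcase 2.
- by [].
- ordcase 8.
- ordcase 6.
- ordcase 3.
- ordcase 8.
- ordcase 8.
Qed.
Lemma me4_ok : forall y, match me4 y with inl y' => (y' != cord 5 5) && (mei4 y' == y) | inr i => ch4 i == y end.
Proof. ordcase 8. Qed.
Lemma c12_spec n a : c12 n a = hc (iE4 n) a.
Proof.
case: a => [[l|y] u] //.
rewrite /iE4 (hc_lEr (sJ1 n) (tJ1 n) (sJ12 n) (tJ12 n) me4_ok).
move: y; ordcase 8.
Qed.

(* instance 5: contract x,y,z of J2 to edge 2 of J12 *)
Definition mv5 (z : 'I_3) : option 'I_2 :=
  match val z with 0 => Some (cord 1 0) | 1 => None | _ => Some (cord 1 1) end.
Definition mvi5 (z : 'I_2) : 'I_3 := match val z with 0 => cord 2 0 | _ => cord 2 2 end.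
Definition me5 (y : 'I_8) : ('I_6 + 'I_3)%type :=
  match val y with 0 => inl (cord 5 0) | 1 => inl (cord 5 1) | 2 => inr (cord 2 0)
  | 3 => inr (cord 2 1) | 4 => inr (cord 2 2) | m => inl (cord 5 (m - 2)) end.
Definition mei5 (y : 'I_6) : 'I_8 :=
  match val y with 0 => cord 7 0 | 1 => cord 7 1 | m => cord 7 (m + 2) end.
Definition ch5 (i : 'I_3) : 'I_8 := cord 7 (i + 2).
Definition iV5 n := @lV n 3 8 2 6 (sJ2 n) (tJ2 n) (sJ12 n) (tJ12 n) (cord 5 2) mv5.
Definition iE5 n := @lE n 3 8 2 6 (sJ2 n) (tJ2 n) (sJ12 n) (tJ12 n) (cord 5 2) me5.
Lemma iso5 n : giso (iV5 n) (iE5 n).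
Proof.
apply: (@lad_giso n 3 8 2 6 (sJ2 n) (tJ2 n) (sJ12 n) (tJ12 n) (cord 5 2) mv5 me5 mvi5 (cord 2 1) mei5 ch5).
- ordcase 3.
- ordcase 2.
- by [].
- ordcase 8.
- ordcase 6.
- ordcase 3.
- ordcase 8.
- ordcase 8.
Qed.
Lemma me5_ok : forall y, match me5 y with inl y' => (y' != cord 5 2) && (mei5 y' == y) | inr i => ch5 i == y end.
Proof. ordcase 8. Qed.
Lemma spec5 n (a : addr (J n)) : c12 n (nab1 a) = hc (iE5 n) (nab2 a).
Proof.
case: a => [[l|y] u] //.
move: y; apply: ordP; do 10! (let i := fresh "i" in intros [|i];
  [intro; cmp; rewrite /iE5 (hc_lEr (sJ2 n) (tJ2 n) (sJ12 n) (tJ12 n) me5_ok); cmp | revert i]).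
by move=> ? H; discriminate H.
Qed.

Lemma deep_edge (G : graph) (F : addr G0 -> addr G) (e : gE G) : is_rearr F ->
  forall M, exists a, M <= size a.2 /\ exists u, F a = (e, u).
Proof.
move=> [C [C' [sigma [phi [HC HC' [Hp _ _ _ _] HF]]]]] M.
have [c' cC' ce] := exp_edge e HC'.
have : c' \in map sigma C by rewrite (perm_mem Hp).
move=> /mapP [c cC Ec]; exists (acat c (nseq M ord0)); split.
  by rewrite /= size_cat size_nseq leq_addl.
by rewrite HF // -Ec /acat ce; eexists.
Qed.

Lemma nonpar k0 k : (forall M, exists a, M <= size a.2 /\ D k0 a <> D k a) ->
  ~ parallel k0 k.
Proof.
move=> H /parallel_D [M HM]; have [a [Ha Hn]] := H M; exact: Hn (HM a Ha).
Qed.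

Lemma hs_step k0 x y : onecube x y -> ~ parallel k0 (x, y) -> halfside k0 x y.
Proof. by move=> H1 H2; apply: rt_step; right. Qed.

Lemma hs_refl k0 x : halfside k0 x x.
Proof. exact: rt_refl. Qed.

Lemma valid_g1 n (fn : addr G0 -> addr (J n)) : is_rearr fn -> valid (Rep (fun x => nab1 (fn x))).
Proof. move=> H; apply: (contr_rearr (iso1 n) H) => x; exact: nab1_spec. Qed.

Lemma req_g1 n (fn : addr G0 -> addr (J n)) :
  req (Rep fn) (@dl (Rep (fun x => nab1 (fn x))) [set inr (cord 7 2)]).
Proof. apply: (contr_req (iso1 n)) => x; exact: nab1_spec. Qed.
From mathcomp Require Import zify.


Lemma valid_g2 n (fn : addr G0 -> addr (J n)) : is_rearr fn -> valid (Rep (fun x => nab2 (fn x))).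
Proof. move=> H; apply: (contr_rearr (iso2 n) H) => x; exact: nab2_spec. Qed.
Lemma req_g2 n (fn : addr G0 -> addr (J n)) :
  req (Rep fn) (@dl (Rep (fun x => nab2 (fn x))) [set inr (cord 7 7)]).
Proof. apply: (contr_req (iso2 n)) => x; exact: nab2_spec. Qed.
Lemma valid_g3 n (fn : addr G0 -> addr (J n)) : is_rearr fn -> valid (Rep (fun x => nab3 n (fn x))).
Proof. move=> H; apply: (contr_rearr (iso3 n) H) => x; exact: nab3_spec. Qed.
Lemma req_g3 n (fn : addr G0 -> addr (J n)) :
  req (Rep fn) (@dl (Rep (fun x => nab3 n (fn x))) [set inr (cord 7 0)]).
Proof. apply: (contr_req (iso3 n)) => x; exact: nab3_spec. Qed.
Lemma valid_g12 n (fn : addr G0 -> addr (J n)) : is_rearr fn ->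
  valid (Rep (fun x => c12 n (nab1 (fn x)))).
Proof. move=> H; exact: (@contr_rearr _ _ _ _ _ (iso4 n) G0 (fun x => nab1 (fn x)) (fun x => c12 n (nab1 (fn x))) (valid_g1 n fn H) (fun x => c12_spec n _)). Qed.
Lemma req_g12a n (fn : addr G0 -> addr (J n)) :
  req (Rep (fun x => nab1 (fn x))) (@dl (Rep (fun x => c12 n (nab1 (fn x)))) [set inr (cord 5 5)]).
Proof. apply: (contr_req (iso4 n)) => x; exact: c12_spec. Qed.
Lemma req_g12b n (fn : addr G0 -> addr (J n)) :
  req (Rep (fun x => nab2 (fn x))) (@dl (Rep (fun x => c12 n (nab1 (fn x)))) [set inr (cord 5 2)]).
Proof. apply: (contr_req (iso5 n)) => x; exact: spec5. Qed.

From mathcomp Require Import zify.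

Lemma wit_lemma (G : graph) (F : addr G0 -> addr G) (e : gE G) k0 k : is_rearr F ->
  (forall a u, F a = (e, u) -> D k0 a <> D k a) -> ~ parallel k0 k.
Proof.
move=> Hf H; apply: nonpar => M; have [a [Ha [u E]]] := @deep_edge _ F e Hf M.
by exists a; split => //; apply: H E.
Qed.

Ltac wit Hf e := apply: (@wit_lemma _ _ e _ _ Hf); let E := fresh "E" in intros ? ? E; rewrite /D /sz /= E; cmp;
  rewrite ?eqxx ?ltn_eqF // eq_sym ltn_eqF //.

Lemma case_FT n (fn : addr G0 -> addr (J n)) : is_rearr fn ->
  exists v : rep, [/\ valid v, #|gE (rG v)| <= 2 * n + 9,
                      Hhalf fn 1 false v & Hhalf fn 2 true v].
Proof.
move=> Hf; exists (Rep (fun x => nab1 (fn x))); split.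
- exact: valid_g1.
- rewrite /= !card_sum !card_ord; lia.
- exact: hs_refl.
- apply: hs_step.
    exists (Rep (fun x => nab1 (fn x))), (inr (cord 7 2)); split; first exact: valid_g1.
    by right; split; [exact: req_refl | exact: req_g1].
  wit Hf (inr (cord 9 2) : gE (J n)).
Qed.

Lemma case_TF n (fn : addr G0 -> addr (J n)) : is_rearr fn ->
  exists v : rep, [/\ valid v, #|gE (rG v)| <= 2 * n + 9,
                      Hhalf fn 1 true v & Hhalf fn 2 false v].
Proof.
move=> Hf; exists (Rep (fun x => nab2 (fn x))); split.
- exact: valid_g2.
- rewrite /= !card_sum !card_ord; lia.
- apply: hs_step.
    exists (Rep (fun x => nab2 (fn x))), (inr (cord 7 7)); split; first exact: valid_g2.
    by right; split; [exact: req_refl | exact: req_g2].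
  wit Hf (inr (cord 9 2) : gE (J n)).
- exact: hs_refl.
Qed.

Lemma case_TT n (fn : addr G0 -> addr (J n)) : is_rearr fn ->
  exists v : rep, [/\ valid v, #|gE (rG v)| <= 2 * n + 9,
                      Hhalf fn 1 true v & Hhalf fn 2 true v].
Proof.
move=> Hf; exists (Rep (fun x => nab3 n (fn x))); split.
- exact: valid_g3.
- rewrite /= !card_sum !card_ord; lia.
- apply: hs_step.
    exists (Rep (fun x => nab3 n (fn x))), (inr (cord 7 0)); split; first exact: valid_g3.
    by right; split; [exact: req_refl | exact: req_g3].
  wit Hf (inr (cord 9 0) : gE (J n)).
- apply: hs_step.
    exists (Rep (fun x => nab3 n (fn x))), (inr (cord 7 0)); split; first exact: valid_g3.
    by right; split; [exact: req_refl | exact: req_g3].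
  wit Hf (inr (cord 9 0) : gE (J n)).
Qed.

Lemma case_FF n (fn : addr G0 -> addr (J n)) : is_rearr fn ->
  exists v : rep, [/\ valid v, #|gE (rG v)| <= 2 * n + 9,
                      Hhalf fn 1 false v & Hhalf fn 2 false v].
Proof.
move=> Hf; exists (Rep (fun x => c12 n (nab1 (fn x)))); split.
- exact: valid_g12.
- rewrite /= !card_sum !card_ord; lia.
- apply: hs_step.
    exists (Rep (fun x => c12 n (nab1 (fn x)))), (inr (cord 5 5)); split; first exact: valid_g12.
    by right; split; [exact: req_refl | exact: req_g12a].
  wit Hf (inr (cord 9 2) : gE (J n)).
- apply: hs_step.
    exists (Rep (fun x => c12 n (nab1 (fn x)))), (inr (cord 5 2)); split; first exact: valid_g12.
    by right; split; [exact: req_refl | exact: req_g12b].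
  wit Hf (inr (cord 9 7) : gE (J n)).
Qed.

Theorem mainTheorem9 (n : nat) (fn : addr G0 -> addr (J n)) (d1 d2 : bool) :
  is_rearr fn ->
  exists v : rep, [/\ valid v, #|gE (rG v)| <= 2 * n + 9,
                      Hhalf fn 1 d1 v & Hhalf fn 2 d2 v].
Proof.
case: d1; case: d2; [exact: case_TT|exact: case_TF|exact: case_FT|exact: case_FF].
Qed.
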